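(* Fix positive integers $n$, $k\le n$ and $h$, and an integer $t\ge 0$. Pick an exact pattern $\rho$ of length $k$ from $[n]$ uniformly at random (i.e., a uniformly random sequence of $k$ distinct elements of $[n]$). Then the probability that the set intersection $\rho\cap(\rho+h)$ has size at least $t$ and there exists a permutation $\pi\in S_n$ such that $\rho$ and $\rho+h$ are both exact patterns in $\pi$ is at most $$\frac{2^{2k-t}k^{k-t}}{k!}.$$
   Context: For a sequence $\sigma=(\sigma(1),\dots,\sigma(n))$ of distinct integers (e.g. a permutation $\pi\in S_n$ written in one-line notation), an exact pattern of $\sigma$ is a sequence $\rho=(\rho(1),\dots,\rho(k))$ of distinct integers such that there are indices $1\le i_1<\dots<i_k\le n$ with $\sigma(i_j)=\rho(j)$ for all $j$. An exact pattern of length $k$ from $[n]$ is any sequence of $k$ distinct elements of $[n]$. For a sequence $\rho$ and integer $h$, $\rho+h$ is the sequence $(\rho(1)+h,\dots,\rho(k)+h)$, and $\rho\cap(\rho+h)$ denotes the intersection of the underlying sets. *)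

(* Defs.v *)
From HB Require Import structures.
From mathcomp Require Import all_boot all_order all_algebra all_fingroup.
Set Implicit Arguments. Unset Strict Implicit. Unset Printing Implicit Defensive.

(* [n] = {1,...,n}; an element i : 'I_n represents the integer i+1. *)

Definition oneline n (pi : 'S_n) : seq nat := [seq (pi i).+1 | i <- enum 'I_n].

(* rho is an exact pattern of sigma: rho = (sigma(i_1),...,sigma(i_k)) with
   i_1 < ... < i_k, i.e. rho is a subsequence of sigma. *)
Definition exact_pattern (rho sigma : seq nat) : bool := subseq rho sigma.

Definition pat_val k n (r : k.-tuple 'I_n) : seq nat := [seq (val i).+1 | i : 'I_n <- r].

Definition shift (h : nat) (s : seq nat) : seq nat := [seq x + h | x <- s].

Definition inter_size (s u : seq nat) : nat := size (undup [seq x <- s | x \in u]).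

Definition patterns k n : {set k.-tuple 'I_n} := [set r : k.-tuple 'I_n | uniq r].

Definition good_patterns k n h t : {set k.-tuple 'I_n} :=
  [set r : k.-tuple 'I_n | uniq r
           && (t <= inter_size (pat_val r) (shift h (pat_val r)))
           && [exists pi : 'S_n, exact_pattern (pat_val r) (oneline pi)
                                 && exact_pattern (shift h (pat_val r)) (oneline pi)]].

(* Main.v *)
Require Import Defs.
From HB Require Import structures.
From mathcomp Require Import all_boot all_order all_algebra all_fingroup.
Import Order.TTheory GRing.Theory Num.Theory.
From mathcomp Require Import zify ring lra.
From Stdlib Require Import Lia.
Set Implicit Arguments. Unset Strict Implicit. Unset Printing Implicit Defensive.

Lemma subseq_index_lt (T : eqType) (s sg : seq T) a b :
  subseq s sg -> uniq sg -> a \in s -> b \in s ->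
  (index a s < index b s) = (index a sg < index b sg).
Proof.
move=> sub usg as_ bs.
pose e := fun x y => index x sg < index y sg.
have pw : pairwise e sg.
  apply/(pairwiseP a) => i j Hi Hj lt.
  by rewrite /e !index_uniq.
have pws := subseq_pairwise sub pw.
move/(pairwiseP a): pws => pws.
have Ha : index a s < size s by rewrite index_mem.
have Hb : index b s < size s by rewrite index_mem.
case: (ltngtP (index a s) (index b s)) => H.
- have := pws _ _ Ha Hb H.
  by rewrite /e !nth_index.
- have := pws _ _ Hb Ha H.
  by rewrite /e !nth_index // => /ltnW; rewrite leqNgt => /negbTE ->.
- have : nth a s (index a s) = nth a s (index b s) by rewrite H.
  by rewrite !nth_index // => ->; rewrite !ltnn.
Qed.

Lemma rank_inj (k : nat) (D : {set 'I_k}) i1 i2 :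
  i1 \in D -> i2 \in D ->
  #|[set d in D | d < i1]| = #|[set d in D | d < i2]| -> i1 = i2.
Proof.
have key : forall j1 j2 : 'I_k, j1 \in D -> j2 \in D -> j1 < j2 ->
   #|[set d in D | d < j1]| < #|[set d in D | d < j2]|.
  move=> j1 j2 D1 D2 lt; apply: proper_card; apply/properP; split.
    apply/subsetP => d; rewrite !inE => /andP[-> /ltn_trans]; exact.
  by exists j1; rewrite !inE ?D1 ?lt // ltnn.
move=> D1 D2 E; apply: val_inj => /=.
case: (ltngtP i1 i2) => // H.
  by have := key _ _ D1 D2 H; rewrite E ltnn.
by have := key _ _ D2 D1 H; rewrite E ltnn.
Qed.

Definition Sof n k (r : k.-tuple 'I_n) : {set 'I_n} := [set x in r].
Definition start n h (S : {set 'I_n}) (x : 'I_n) : bool :=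
  (x \in S) && [forall y in S, val x != val y + h].
Definition Ipos n k h (r : k.-tuple 'I_n) : {set 'I_k} :=
  [set j | [exists y in Sof r, val y == val (tnth r j) + h]].
Definition Dpos n k h (r : k.-tuple 'I_n) : {set 'I_k} :=
  [set d | ~~ start h (Sof r) (tnth r d)].
Definition sp n k h (r : k.-tuple 'I_n) (j : 'I_k) : 'I_k :=
  odflt j [pick i | val (tnth r i) == val (tnth r j) + h].
Definition fenc n k h (r : k.-tuple 'I_n) : {ffun 'I_n -> option 'I_k} :=
  [ffun x => if start h (Sof r) x then insub (index x r) else None].
Definition gd n k h (r : k.-tuple 'I_n) :=
  uniq r && [exists pi : 'S_n, exact_pattern (pat_val r) (oneline pi)
                             && exact_pattern (shift h (pat_val r)) (oneline pi)].

Lemma tindex n k (r : k.-tuple 'I_n) i : uniq r -> index (tnth r i) r = i.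
Proof. by move=> u; rewrite (tnth_nth (tnth r i)) index_uniq // size_tuple. Qed.

Lemma tnth_injU n k (r : k.-tuple 'I_n) i j : uniq r -> tnth r i = tnth r j -> i = j.
Proof. by move=> u E; apply: val_inj; rewrite /= -(tindex i u) -(tindex j u) E. Qed.

Lemma nth_pat n k (r : k.-tuple 'I_n) (i : 'I_k) :
  nth 0 (pat_val r) i = (val (tnth r i)).+1.
Proof. by rewrite /pat_val (nth_map (tnth r i)) ?size_tuple // -tnth_nth. Qed.

Lemma size_pat n k (r : k.-tuple 'I_n) : size (pat_val r) = k.
Proof. by rewrite size_map size_tuple. Qed.

Lemma uniq_pat n k (r : k.-tuple 'I_n) : uniq r -> uniq (pat_val r).
Proof.
move=> u; rewrite map_inj_uniq // => x y /eqP; rewrite eqSS => /eqP; exact: val_inj.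
Qed.

Lemma uniq_shift h s : uniq s -> uniq (shift h s).
Proof. by move=> u; rewrite map_inj_uniq // => x y /addIn. Qed.

Lemma uniq_oneline n (pi : 'S_n) : uniq (oneline pi).
Proof.
rewrite map_inj_uniq ?enum_uniq // => x y /eqP; rewrite eqSS => /eqP E.
exact: (perm_inj (val_inj E)).
Qed.

Lemma sp_spec n k h (r : k.-tuple 'I_n) j : j \in Ipos h r ->
  val (tnth r (sp h r j)) = val (tnth r j) + h.
Proof.
rewrite inE => /existsP[y /andP[]]; rewrite inE => /tnthP[i ->] /eqP E.
rewrite /sp; case: pickP => [i' /eqP //|/(_ i)]; by rewrite E eqxx.
Qed.

Lemma consistent n k h (r : k.-tuple 'I_n) j1 j2 : gd h r ->
  j1 \in Ipos h r -> j2 \in Ipos h r -> (j1 < j2) = (sp h r j1 < sp h r j2).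
Proof.
case/andP=> u /existsP[pi /andP[s1 s2]] I1 I2.
set sg := oneline pi.
have usg : uniq sg := uniq_oneline pi.
have up := uniq_pat u.
have ush := uniq_shift h up.
pose w j := (val (tnth r j)).+1 + h.
have Hr : forall j, j \in Ipos h r -> index (w j) (pat_val r) = sp h r j /\ w j \in pat_val r.
  move=> j Ij; have E : w j = nth 0 (pat_val r) (sp h r j).
    by rewrite nth_pat sp_spec // /w addSn.
  by rewrite E index_uniq ?size_pat //; split =>//; rewrite mem_nth ?size_pat.
have Hs : forall j, index (w j) (shift h (pat_val r)) = j /\ w j \in shift h (pat_val r).
  move=> j; have E : w j = nth 0 (shift h (pat_val r)) j.
    by rewrite /shift (nth_map 0) ?size_pat // nth_pat.
  by rewrite E index_uniq ?size_map ?size_tuple //; split =>//; rewrite mem_nth ?size_map ?size_tuple.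
have [a1 b1] := Hr _ I1; have [a2 b2] := Hr _ I2.
have [c1 d1] := Hs j1; have [c2 d2] := Hs j2.
rewrite -a1 -a2 (@subseq_index_lt _ _ _ _ _ s1 usg b1 b2).
by rewrite -(@subseq_index_lt _ _ _ _ _ s2 usg d1 d2) c1 c2.
Qed.

Lemma rank_eq n k h (r : k.-tuple 'I_n) j : gd h r -> j \in Ipos h r ->
  #|[set d in Dpos h r | d < sp h r j]| = #|[set j' in Ipos h r | j' < j]|.
Proof.
move=> g Ij; have u : uniq r by case/andP: g.
have E : [set d in Dpos h r | d < sp h r j] = sp h r @: [set j' in Ipos h r | j' < j].
  apply/setP => d; rewrite inE; apply/andP/imsetP.
  - case=> Dd ltd; move: Dd; rewrite inE /start inE mem_tnth /=.
    move/forallPn => [y]; rewrite negb_imply negbK => /andP[yS /eqP vy].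
    move: (yS); rewrite inE => /tnthP[j' yj]; subst y.
    have Ij' : j' \in Ipos h r.
      by rewrite inE; apply/existsP; exists (tnth r d); rewrite inE mem_tnth /=; apply/eqP.
    have spd : sp h r j' = d.
      by apply: (tnth_injU u); apply: val_inj; rewrite sp_spec // vy.
    exists j' => //; rewrite inE Ij' /=.
    by rewrite (consistent g Ij' Ij) spd.
  - case=> j' /setIdP[Ij' lt] ->; split.
      rewrite inE /start; apply/negP => /andP[_ /forallP /(_ (tnth r j'))].
      by rewrite inE mem_tnth sp_spec // eqxx.
    by rewrite -(consistent g Ij' Ij).
rewrite E card_in_imset // => a b /setIdP[Ia _] /setIdP[Ib _] Eab.
apply: (tnth_injU u); apply: val_inj; apply/(@addIn h).
by rewrite -!sp_spec // Eab.
Qed.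

Lemma fenc_start n k h (r : k.-tuple 'I_n) d : uniq r ->
  start h (Sof r) (tnth r d) -> fenc h r (tnth r d) = Some d.
Proof. by move=> u s; rewrite ffunE s tindex // valK. Qed.

Lemma fenc_some n k h (r : k.-tuple 'I_n) x d : uniq r ->
  fenc h r x = Some d -> tnth r d = x.
Proof.
move=> u; rewrite ffunE; case: ifP => // sx; case: insubP => // i lt vi [eid].
have xr : x \in r by move: sx => /andP[]; rewrite inE.
by rewrite (tnth_nth x) -eid vi nth_index.
Qed.

Lemma start_pos n k h (r : k.-tuple 'I_n) d : uniq r ->
  start h (Sof r) (tnth r d) = [exists x, fenc h r x == Some d].
Proof.
move=> u; apply/idP/existsP => [s|[x /eqP F]].
  by exists (tnth r d); rewrite fenc_start.
have := fenc_some u F => ->; move: F; rewrite ffunE; by case: ifP.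
Qed.

Lemma enc_inj n k h (r1 r2 : k.-tuple 'I_n) : 0 < h -> gd h r1 -> gd h r2 ->
  Sof r1 = Sof r2 -> Ipos h r1 = Ipos h r2 -> fenc h r1 = fenc h r2 -> r1 = r2.
Proof.
move=> hp g1 g2 ES EI EF.
have u1 : uniq r1 by case/andP: g1.
have u2 : uniq r2 by case/andP: g2.
have ED : Dpos h r1 = Dpos h r2.
  by apply/setP => d; rewrite !inE !start_pos // EF.
suff H : forall m i, val (tnth r1 i) < m -> tnth r1 i = tnth r2 i.
  by apply: eq_from_tnth => i; apply: (H (val (tnth r1 i)).+1).
elim=> // m IH i lt.
set x := tnth r1 i.
have xS : x \in Sof r1 by rewrite inE mem_tnth.
case sx: (start h (Sof r1) x).
  by symmetry; apply: (fenc_some (h:=h) u2); rewrite -EF fenc_start.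
move: (sx); rewrite /start xS /= => /negbT /forallPn [y].
rewrite negb_imply negbK => /andP[yS /eqP vxy].
move: (yS); rewrite inE => /tnthP[j yj]; subst y.
have Ij1 : j \in Ipos h r1.
  by rewrite inE; apply/existsP; exists x; rewrite xS /=; apply/eqP.
have spj : sp h r1 j = i.
  by apply: (tnth_injU u1); apply: val_inj; rewrite sp_spec // vxy.
have IHj : tnth r1 j = tnth r2 j.
  apply: IH; move: lt vxy hp; rewrite -/x /=; lia.
have Ij2 : j \in Ipos h r2 by rewrite -EI.
set i2 := sp h r2 j.
have x2 : tnth r2 i2 = x.
  by apply: val_inj; rewrite sp_spec // -IHj; exact/esym/vxy.
suff -> : i = i2 by [].
apply: (@rank_inj _ (Dpos h r1)).
- by rewrite inE -/x sx.
- by rewrite ED inE x2 -ES sx.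
- by rewrite -{1}spj rank_eq // ED rank_eq // EI.
Qed.

Lemma starts_bound n k h t (r : k.-tuple 'I_n) : uniq r ->
  t <= inter_size (pat_val r) (shift h (pat_val r)) ->
  #|[set x | start h (Sof r) x]| + t <= k.
Proof.
move=> u.
have up := uniq_pat u.
rewrite /inter_size undup_id ?filter_uniq // size_filter count_map.
have -> : count (preim (fun i : 'I_n => (val i).+1) (mem (shift h (pat_val r)))) r
        = count (fun x => ~~ start h (Sof r) x) r.
  apply: eq_in_count => x xr /=.
  have -> : shift h (pat_val r) = map (fun y : 'I_n => (val y).+1 + h) r.
    by rewrite /shift /pat_val -map_comp.
  apply/mapP/idP.
  - case=> y yr E; rewrite /start; apply/negP => /andP[_ /forallP/(_ y)].
    have E' : val x = val y + h by move: E; rewrite addSn => -[].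
    rewrite inE yr /= => /eqP; apply; exact: E'.
  - rewrite /start inE xr /= => /forallPn [y]; rewrite negb_imply negbK inE.
    by case/andP => yr /eqP E; exists y => //; rewrite E addSn.
have Hc : count (start h (Sof r)) r = #|[set x | start h (Sof r) x]|.
  rewrite -size_filter; move/card_uniqP: (filter_uniq (start h (Sof r)) u) => <-.
  apply: eq_card => x; rewrite mem_filter inE.
  by case sx: (start _ _ _) => //=; move: sx => /andP[]; rewrite inE.
have E := count_predC (start h (Sof r)) r; rewrite size_tuple Hc in E.
have E2 : #|[set x | start h (Sof r) x]| + count (fun x => ~~ start h (Sof r) x) r = k := E.
move=> Ht; lia.
Qed.

Lemma good_gd n k h t (r : k.-tuple 'I_n) :
  r \in good_patterns k n h t -> [/\ gd h r, uniq r &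
     #|[set x | start h (Sof r) x]| + t <= k].
Proof.
rewrite inE => /andP[/andP[u ti] ex]; split => //.
  by rewrite /gd u.
exact: starts_bound.
Qed.

Lemma inner_bound n k h t (S : {set 'I_n}) : 0 < h -> 0 < k ->
  #|[set r | (r \in good_patterns k n h t) && (Sof r == S)]| <= 2 ^ k * k ^ (k - t).
Proof.
move=> hp kp.
set A := [set r | _ && _].
case: (set_0Vmem A) => [-> | [r0 r0A]]; first by rewrite cards0.
move: r0A; rewrite inE => /andP[/good_gd[_ _ Hb] /eqP S0].
rewrite S0 in Hb.
pose E := fun r : k.-tuple 'I_n => (Ipos h r, fenc h r).
rewrite -(card_in_imset (f := E)); last first.
  move=> a b aA bA; move: aA; rewrite inE => /andP[/good_gd[ga _ _] /eqP Sa].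
  move: bA; rewrite inE => /andP[/good_gd[gb _ _] /eqP Sb] [].
  by apply: enc_inj => //; rewrite Sa Sb.
pose D := [set x | start h S x].
pose R := [set Some i | i : 'I_k].
have sub : E @: A \subset setX (powerset [set: 'I_k]) [set f in pffun_on None D R].
  apply/subsetP => o /imsetP[r rA ->]; move: rA; rewrite inE => /andP[/good_gd[g u _] /eqP Sr].
  rewrite inE /= powersetE subsetT /= inE.
  apply/pffun_onP; split.
    apply/subsetP => x; rewrite inE /= ffunE; case: ifP => // sx _.
    by rewrite inE -Sr.
  move=> o2 /imageP[x xD ->]; rewrite ffunE.
  move: xD; rewrite inE -Sr => sx; rewrite sx.
  have xr : x \in r by move: sx => /andP[]; rewrite inE.
  case: insubP => [i _ _|]; first exact: imset_f.
  by rewrite -{2}(size_tuple r) index_mem xr.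
apply: (leq_trans (subset_leq_card sub)).
rewrite cardsX card_powerset cardsT card_ord cardsE card_pffun_on.
rewrite leq_mul2l; apply/orP; right.
rewrite card_imset; last by move=> a b [].
rewrite card_ord; apply: leq_pexp2l => //.
move: Hb; rewrite -/D; lia.
Qed.

Lemma good_count n k h t : 0 < h -> 0 < k ->
  #|good_patterns k n h t| <= 'C(n, k) * (2 ^ k * k ^ (k - t)).
Proof.
move=> hp kp.
rewrite -sum1_card (partition_big (@Sof n k) (fun S => #|S| == k)) /=; last first.
  move=> r /good_gd[_ u _]; rewrite cardsE; move/card_uniqP: u => ->.
  by rewrite size_tuple.
have -> : 'C(n, k) = #|[set S : {set 'I_n} | #|S| == k]| by rewrite card_draws card_ord.
rewrite -sum_nat_const [X in _ <= X](eq_bigl (fun S : {set 'I_n} => #|S| == k)); last by move=> S; rewrite ?inE.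
apply: leq_sum => S _.
rewrite sum1dep_card; exact: inner_bound.
Qed.

Lemma good_t n k h t (r : k.-tuple 'I_n) : r \in good_patterns k n h t -> t <= k.
Proof. by case/good_gd => _ _; apply: leq_trans; apply: leq_addl. Qed.

Local Open Scope ring_scope.

Theorem lemma3p5 (n k h t : nat) :
  (0 < n)%N -> (0 < k)%N -> (k <= n)%N -> (0 < h)%N ->
  (#|good_patterns k n h t|%:R / #|patterns k n|%:R : rat)
    <= (2%:Q ^ ((2 * k)%:Z - t%:Z)) * ((k%:Q) ^ (k%:Z - t%:Z)) / (k`!)%:R.
Proof.
move=> n0 k0 kn h0.
have Pcard : #|patterns k n| = (n ^_ k)%N.
  have -> : patterns k n = [set t : k.-tuple 'I_n | all predT t & uniq t].
    by apply/setP => r; rewrite !inE all_predT.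
  by rewrite card_uniq_tuples cardT size_enum_ord.
have Ppos : (0 < #|patterns k n|)%N by rewrite Pcard ffact_gt0.
case: (leqP t k) => tk.
- rewrite !subzn //; last by lia.
  rewrite -!exprnP ler_pdivrMr ?ltr0n //.
  rewrite Pcard -bin_ffact.
  have fn0 : (k`!)%:R != 0 :> rat by rewrite pnatr_eq0 -lt0n fact_gt0.
  have -> : 2%:Q ^+ (2 * k - t) * k%:Q ^+ (k - t) / (k`!)%:R * ('C(n, k) * k`!)%N%:R
          = (2 ^ (2 * k - t) * k ^ (k - t) * 'C(n, k))%N%:R.
    rewrite !natrM !natrX; field => //.
  rewrite ler_nat; apply: (leq_trans (good_count n t h0 k0)).
  rewrite mulnC leq_mul2r leq_mul2r; apply/orP; right; apply/orP; right.
  by apply: leq_pexp2l => //; lia.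
- have G0 : good_patterns k n h t = set0.
    apply/setP => r; rewrite in_set0; apply/negbTE/negP => /good_t.
    by rewrite leqNgt tk.
  rewrite G0 cards0 mul0r.
  by rewrite divr_ge0 // mulr_ge0 // exprz_ge0.
Qed.
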